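(* Let $d=\mu_+-\mu_-$, $\epsilon\in[0,d/4]$ and $K\in(1,\bar B_K(\epsilon))$, where $\bar B_K(\epsilon)=\min\{\exp((d-2\epsilon)^2/2),\ \phi^{-1}(d/\epsilon-2)\}$, $\phi:[1,\infty)\to[2,\infty)$, $\phi(x)=x+1/x$ (with $\phi^{-1}(+\infty):=+\infty$ when $\epsilon=0$). Define $$g(\epsilon;\theta,K)=\frac1K\exp\!\left(-\frac{(\theta+\epsilon-\mu_+)^2}{2K^2}\right)-\exp\!\left(-\frac{(\theta-\epsilon-\mu_-)^2}{2}\right).$$ Then for every $\theta\in[\theta_{\mathrm f},\theta^{(\epsilon)}_{\mathrm r}]$, $g(\epsilon;\theta,K)\le g(0;\theta,K)$.
   Context: Setting (one-dimensional Gaussian mixture). Fix real numbers $\mu_-<\mu_+$ and $K>1$, and let $d=\mu_+-\mu_-$. Let $(X,Y)$ be a random pair with $\Pr(Y=1)=\Pr(Y=-1)=\tfrac12$, $X\mid Y=-1\sim\mathcal N(\mu_-,1)$, and $X\mid Y=1\sim\mathcal N(\mu_+,K^2)$. For $\theta\in\mathbb R$, $f_\theta(x)=1$ if $x>\theta$ and $f_\theta(x)=-1$ otherwise. Class-conditional errors: $e_+(\theta)=\Pr(X\le\theta\mid Y=1)$, $e_-(\theta)=\Pr(X>\theta\mid Y=-1)$. For $\epsilon\ge0$, robust error: $R_{\mathrm{rob}}^{\epsilon}(\theta)=\tfrac12\Pr(X\le\theta+\epsilon\mid Y=1)+\tfrac12\Pr(X>\theta-\epsilon\mid Y=-1)$.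 $\theta_{\mathrm f}$ is the threshold in $[\mu_-,\mu_+]$ with $e_+(\theta_{\mathrm f})=e_-(\theta_{\mathrm f})$ (explicitly $\theta_{\mathrm f}=\mu_-+d/(K+1)$); $\theta^{(\epsilon)}_{\mathrm r}$ is the minimizer of $R^{\epsilon}_{\mathrm{rob}}$ over $[\mu_-,\mu_+]$. *)

(* Defs.v *)
From HB Require Import structures.
From mathcomp Require Import all_boot all_order all_algebra.
From mathcomp Require Import all_classical all_reals all_analysis.
Set Implicit Arguments. Unset Strict Implicit. Unset Printing Implicit Defensive.
Import Order.TTheory GRing.Theory Num.Theory.
Local Open Scope classical_set_scope.
Local Open Scope ring_scope.

Section GaussMixture.
Variable R : realType.

(* Pr(X <= t | Y = 1), with X | Y=1 ~ N(mup, K^2) *)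
Definition prob_le_pos (mup K t : R) : R :=
  fine (normal_prob mup K [set` `]-oo, t]]).

(* Pr(X > t | Y = -1), with X | Y=-1 ~ N(mum, 1) *)
Definition prob_gt_neg (mum t : R) : R :=
  fine (normal_prob mum 1 [set` `]t, +oo[]).

Definition e_pos (mup K theta : R) : R := prob_le_pos mup K theta.
Definition e_neg (mum theta : R) : R := prob_gt_neg mum theta.

Definition R_rob (mum mup K eps theta : R) : R :=
  2^-1 * prob_le_pos mup K (theta + eps) + 2^-1 * prob_gt_neg mum (theta - eps).

Definition theta_f (mum mup K : R) : R := mum + (mup - mum) / (K + 1).

Definition is_rob_minimizer (mum mup K eps t : R) : Prop :=
  mum <= t <= mup /\
  forall s, mum <= s <= mup -> R_rob mum mup K eps t <= R_rob mum mup K eps s.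

(* inverse of phi(x) = x + 1/x : [1,oo) -> [2,oo), defined for y >= 2 *)
Definition phi_inv (y : R) : R := (y + Num.sqrt (y ^+ 2 - 4)) / 2.

Definition g_fun (mum mup K eps theta : R) : R :=
  K^-1 * expR (- (theta + eps - mup) ^+ 2 / (2 * K ^+ 2))
  - expR (- (theta - eps - mum) ^+ 2 / 2).

End GaussMixture.

(* Main.v *)
Require Import Defs.
From HB Require Import structures.
From mathcomp Require Import all_boot all_order all_algebra.
From mathcomp Require Import all_classical all_reals all_analysis.
From mathcomp Require Import ring lra measurable_realfun.
Import Order.TTheory GRing.Theory Num.Theory.
Local Open Scope classical_set_scope.
Local Open Scope ring_scope.

Section Aux.
Variable R : realType.
Notation mu := (@lebesgue_measure R).

Lemma shiftF'E (c : R) : (fun z : R => z + c)^`()%classic = cst 1.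
Proof.
apply/funext => x; rewrite derive1E deriveD// derive_id derive_cst addr0.
by [].
Qed.

Lemma shift_int (m s c x y : R) : s != 0 -> x <= y ->
  (\int[mu]_(z in `[(x + c)%R, (y + c)%R]) (normal_pdf m s z)%:E =
   \int[mu]_(z in `[x, y]) (normal_pdf m s (z + c)%R)%:E)%E.
Proof.
move=> s0 xy.
have := @integration_by_substitution_increasing R (fun z => z + c) (normal_pdf m s) x y xy.
rewrite shiftF'E => ->.
- by apply: eq_integral => z _ /=; rewrite mulr1.
- by move=> a b _ _ ab; rewrite ltrD2r.
- by move=> z _; exact: cvg_cst.
- exact: is_cvg_cst.
- exact: is_cvg_cst.
- split.
  + by move=> z _; exact: derivableD.
  + apply: cvg_at_right_filter; apply: cvgD; [exact: cvg_id|exact: cvg_cst].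
  + apply: cvg_at_left_filter; apply: cvgD; [exact: cvg_id|exact: cvg_cst].
- have := @continuous_subspaceT R^o R^o `[(x + c)%R, (y + c)%R] (normal_pdf m s) (@continuous_normal_pdf R m s s0). exact.
Qed.

Lemma mpdf_shift (m s c : R) (D : set R) : measurable_fun D (fun z => (normal_pdf m s (z + c))%:E).
Proof.
apply/measurable_EFinP; apply: measurable_funTS.
apply: (measurableT_comp (measurable_normal_pdf m s)).
by apply: measurable_funD.
Qed.

Lemma P_itv_int (m s x y : R) :
  normal_prob m s [set` `]x, y]] =
  (\int[mu]_(z in `[x, y]) (normal_pdf m s z)%:E)%E.
Proof.
rewrite /normal_prob integral_itv_obnd_cbnd//.
apply/measurable_EFinP; apply: measurable_funTS; exact: measurable_normal_pdf.
Qed.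

Lemma P_fin (m s : R) (A : set R) : measurable A -> normal_prob m s A \is a fin_num.
Proof. move=> mA; exact: fin_num_measure. Qed.

Lemma Pcompare (m1 m2 s1 s2 c1 c2 x y : R) : s1 != 0 -> s2 != 0 -> x <= y ->
  (forall z, x <= z <= y -> normal_pdf m1 s1 (z + c1) <= normal_pdf m2 s2 (z + c2)) ->
  fine (normal_prob m1 s1 [set` `](x + c1), (y + c1)]]) <=
  fine (normal_prob m2 s2 [set` `](x + c2), (y + c2)]]).
Proof.
move=> s10 s20 xy H.
apply: fine_le; rewrite ?P_fin//.
rewrite !P_itv_int !shift_int//.
apply: ge0_le_integral.
- exact: measurable_itv.
- by move=> z _; rewrite lee_fin normal_pdf_ge0.
- exact: mpdf_shift.
- exact: mpdf_shift.
- move=> z /=; rewrite in_itv /= => /andP[] ? ?.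
  by rewrite lee_fin H //; apply/andP.
Qed.
Implicit Types m s x y : R.
Lemma split_le m s x y : x <= y ->
  fine (normal_prob m s [set` `]-oo, y]]) =
  fine (normal_prob m s [set` `]-oo, x]]) + fine (normal_prob m s [set` `]x, y]]).
Proof.
move=> xy.
rewrite (@itv_bndbnd_setU _ _ _ (BRight x)) ?bnd_simp//.
rewrite measureU; [|exact: measurable_itv|exact: measurable_itv|].
  by rewrite fineD // P_fin.
apply/seteqP; split => z //=; rewrite /setI /= !in_itv /=.
by move=> [] /=; rewrite ?andbT => ? ?; lra.

Qed.

Lemma split_gt m s x y : x <= y ->
  fine (normal_prob m s [set` `]x, +oo[]) =
  fine (normal_prob m s [set` `]x, y]]) + fine (normal_prob m s [set` `]y, +oo[]).
Proof.
move=> xy.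
rewrite (@itv_bndbnd_setU _ _ _ (BRight y)) ?bnd_simp//.
rewrite measureU; [|exact: measurable_itv|exact: measurable_itv|].
  by rewrite fineD // P_fin.
apply/seteqP; split => z //=; rewrite /setI /= !in_itv /=.
by move=> [] /=; rewrite ?andbT => ? ?; lra.

Qed.

Lemma Rrob_le (mum mup K eps s t : R) : K != 0 -> s <= t ->
  (forall z, s <= z <= t -> normal_pdf mum 1 (z - eps) <= normal_pdf mup K (z + eps)) ->
  R_rob mum mup K eps s <= R_rob mum mup K eps t.
Proof.
move=> K0 st H.
rewrite /R_rob /prob_le_pos /prob_gt_neg.
rewrite (@split_le mup K (s + eps) (t + eps)); last by rewrite lerD2r.
rewrite (@split_gt mum 1 (s - eps) (t - eps)); last by rewrite lerD2r.
have := @Pcompare mum mup 1 K (- eps) eps s t (oner_neq0 _) K0 st H.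
lra.
Qed.
Lemma peakK (K : R) : 0 < K -> normal_peak K = K^-1 * normal_peak 1.
Proof.
move=> K0; rewrite /normal_peak expr1n mul1r -mulrnAr sqrtrM ?sqr_ge0// sqrtr_sqr.
rewrite gtr0_norm// invfM.
by [].
Qed.

Lemma pdf_g (mum mup K eps z : R) : 0 < K ->
  normal_pdf mup K (z + eps) - normal_pdf mum 1 (z - eps) =
  normal_peak 1 * g_fun mum mup K eps z.
Proof.
move=> K0; rewrite /normal_pdf gt_eqF// oner_eq0 /g_fun /normal_fun peakK//.
rewrite expr1n -mulr_natl.
ring.
Qed.
Definition Qf (mum mup K eps x : R) :=
  (x - eps - mum) ^+ 2 / 2 - (x + eps - mup) ^+ 2 / (2 * K ^+ 2).

Lemma g_fact (mum mup K eps x : R) : 0 < K ->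
  g_fun mum mup K eps x =
  expR (- (x - eps - mum) ^+ 2 / 2) * K^-1 * (expR (Qf mum mup K eps x) - K).
Proof.
move=> K0.
have E : expR (- (x + eps - mup) ^+ 2 / (2 * K ^+ 2)) =
  expR (- (x - eps - mum) ^+ 2 / 2) * expR (Qf mum mup K eps x).
  by rewrite -expRD /Qf; congr expR; ring.
rewrite /g_fun E.
have K0' : K != 0 by rewrite gt_eqF.
by field.
Qed.

Lemma Qf_mono (mum mup K eps x y : R) : 1 < K -> 2 * eps <= mup - mum ->
  mum + eps <= x -> x <= y -> Qf mum mup K eps x <= Qf mum mup K eps y.
Proof.
move=> K1 de ax xy.
have K0 : K != 0 by rewrite gt_eqF// (lt_trans _ K1).
rewrite -subr_ge0.
have -> : Qf mum mup K eps y - Qf mum mup K eps x =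
  (y - x) * ((K ^+ 2 - 1) * (x + y - 2 * (mum + eps)) + 2 * ((mup - mum) - 2 * eps)) / (2 * K ^+ 2).
  by rewrite /Qf; field.
apply: divr_ge0; last by nra.
apply: mulr_ge0; first lra.
apply: addr_ge0; last lra.
apply: mulr_ge0; nra.
Qed.

Lemma g_sign (mum mup K eps x y : R) : 1 < K -> 2 * eps <= mup - mum ->
  mum + eps <= x -> x <= y -> 0 <= g_fun mum mup K eps x -> 0 <= g_fun mum mup K eps y.
Proof.
move=> K1 de ax xy.
have K0 : 0 < K by apply: lt_trans ltr01 K1.
rewrite !g_fact// => gx.
have P0 : forall z, 0 < expR (- (z - eps - mum) ^+ 2 / 2) * K^-1.
  by move=> z; rewrite mulr_gt0 ?expR_gt0 ?invr_gt0.
rewrite mulr_ge0 ?(ltW (P0 _))// subr_ge0.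
have := @Qf_mono _ _ _ _ _ _ K1 de ax xy; rewrite -ler_expR => h.
apply: le_trans h.
by move: gx; rewrite pmulr_rge0 ?P0// subr_ge0.
Qed.

Lemma g_a_neg (mum mup K eps : R) : 1 < K -> g_fun mum mup K eps (mum + eps) < 0.
Proof.
move=> K1; have K0 : 0 < K by apply: lt_trans ltr01 K1.
rewrite g_fact// pmulr_rlt0 ?mulr_gt0 ?expR_gt0 ?invr_gt0// subr_lt0.
apply: le_lt_trans K1; rewrite -expR0 ler_expR /Qf.
have -> : mum + eps - eps - mum = 0 by ring.
rewrite expr0n /= mul0r sub0r oppr_le0.
by rewrite divr_ge0 ?sqr_ge0// mulr_ge0 ?sqr_ge0.
Qed.

Lemma absl (a b X Y : R) : 0 <= a -> a <= b -> X <= Y -> 0 <= Y ->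
  a - b <= a * expR (- X) - b * expR (- Y).
Proof.
move=> a0 ab XY Y0.
have eYX : expR (- Y) <= expR (- X) by rewrite ler_expR lerN2.
have eY1 : expR (- Y) <= 1 by rewrite -expR0 ler_expR oppr_le0.
have eY0 : 0 < expR (- Y) by apply: expR_gt0.
have [X0|X0] := leP 0 X.
  have eX1 : expR (- X) <= 1 by rewrite -expR0 ler_expR oppr_le0.
  nra.
have eX1 : 1 <= expR (- X) by rewrite -expR0 ler_expR oppr_ge0 ltW.
nra.
Qed.

Lemma final_alg (mum mup K eps t : R) : 1 < K -> 0 < eps ->
  eps * (K + 1) ^+ 2 < (mup - mum) * K ->
  theta_f mum mup K <= t -> t <= mup ->
  g_fun mum mup K eps t <= 0 ->
  g_fun mum mup K eps t <= g_fun mum mup K 0 t.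
Proof.
move=> K1 e0 key tf tm g0.
have K0 : 0 < K by apply: lt_trans ltr01 K1.
have K0' : K != 0 by rewrite gt_eqF.
set u := t - mum; set v := mup - t.
have ud : mup - mum <= u * (K + 1).
  move: tf; rewrite /theta_f -lerBrDl -/u => h.
  by rewrite -ler_pdivrMr ?addr_gt0.
set X := eps * (2 * v - eps) / (2 * K ^+ 2).
set Y := eps * (2 * u - eps) / 2.
set a := K^-1 * expR (- (t + eps - mup) ^+ 2 / (2 * K ^+ 2)).
set b := expR (- (t - eps - mum) ^+ 2 / 2).
have Ea : K^-1 * expR (- (t + 0 - mup) ^+ 2 / (2 * K ^+ 2)) = a * expR (- X).
  rewrite /a -mulrA -expRD; congr (_ * expR _); rewrite /X /v; field.
  by [].
have Eb : expR (- (t - 0 - mum) ^+ 2 / 2) = b * expR (- Y).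
  by rewrite /b -expRD; congr expR; rewrite /Y /u; field.
have -> : g_fun mum mup K 0 t = a * expR (- X) - b * expR (- Y) by rewrite /g_fun Ea Eb.
have -> : g_fun mum mup K eps t = a - b by [].
have ue : eps < u.
  have : eps * (K + 1) < u * (K + 1) by nra.
  by rewrite ltr_pM2r ?addr_gt0.
apply: absl.
- by rewrite /a mulr_ge0 ?invr_ge0 ?expR_ge0 ?ltW.
- by move: g0; rewrite /g_fun subr_le0.
- rewrite /X /Y ler_pdivrMr ?mulr_gt0 ?exprn_gt0//.
  have h1 : 0 <= (K + 1) * (K ^+ 2 * (2 * u - eps) - (2 * v - eps)).
    have -> : (K + 1) * (K ^+ 2 * (2 * u - eps) - (2 * v - eps)) =
      2 * (K ^+ 2 + 1) * (u * (K + 1) - (mup - mum)) + (K - 1) * ((mup - mum) * K - eps * (K + 1) ^+ 2) +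
      (K - 1) * ((mup - mum) * K).
      by rewrite /v /u; ring.
    apply: addr_ge0; [apply: addr_ge0|]; apply: mulr_ge0; try nra.
  have h2 : 0 <= K ^+ 2 * (2 * u - eps) - (2 * v - eps).
    by move: h1; rewrite pmulr_rge0 ?addr_gt0.
  nra.
- rewrite /Y divr_ge0//; nra.
Qed.

Lemma phi_key (mum mup K eps : R) : 0 < eps -> eps <= (mup - mum) / 4 -> 1 < K ->
  K < phi_inv ((mup - mum) / eps - 2) -> eps * (K + 1) ^+ 2 < (mup - mum) * K.
Proof.
move=> e0 e4 K1; rewrite /phi_inv.
set y := (mup - mum) / eps - 2.
have yE : (mup - mum) = (y + 2) * eps by rewrite /y; field; rewrite gt_eqF.
have y2 : 2 <= y.
  have : 4 * eps <= mup - mum by move: e4; rewrite ler_pdivlMr //; lra.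
  rewrite yE => h; nra.
set r := Num.sqrt (y ^+ 2 - 4).
have r0 : 0 <= r by apply: sqrtr_ge0.
have r2 : r ^+ 2 = y ^+ 2 - 4 by rewrite sqr_sqrtr //; nra.
move=> Kr.
have h1 : 2 * K - y < r by lra.
have h2 : y - 2 <= r.
  rewrite -(ler_pXn2r (n:=2)) //; last by rewrite nnegrE; lra.
  rewrite r2; nra.
have h3 : K ^+ 2 + 1 < y * K by nra.
rewrite yE; nra.
Qed.
End Aux.

Theorem mainTheorem6 (R : realType) (mum mup K eps theta_r : R) :
  mum < mup ->
  0 <= eps -> eps <= (mup - mum) / 4 ->
  1 < K ->
  K < expR ((mup - mum - 2 * eps) ^+ 2 / 2) ->
  (0 < eps -> K < phi_inv ((mup - mum) / eps - 2)) ->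
  is_rob_minimizer mum mup K eps theta_r ->
  (forall t, is_rob_minimizer mum mup K eps t -> t = theta_r) ->
  forall theta, theta_f mum mup K <= theta <= theta_r ->
    g_fun mum mup K eps theta <= g_fun mum mup K 0 theta.
Proof.
move=> mm e0 e4 K1 _ Kphi [[/andP[rl ru] rmin]] uniq theta /andP[tf tr].
have [->|enz] := eqVneq eps 0; first by [].
have ep : 0 < eps by rewrite lt_neqAle eq_sym enz.
have key := phi_key _ _ _ _ _ ep e4 K1 (Kphi ep).
have K0 : 0 < K by apply: lt_trans ltr01 K1.
have K0' : K != 0 by rewrite gt_eqF.
have de : 2 * eps <= mup - mum.
  by move: e4; rewrite ler_pdivlMr //; lra.
have atf : mum + eps <= theta_f mum mup K.
  rewrite /theta_f lerD2l ler_pdivlMr ?addr_gt0 //; nra.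
have tm : theta <= mup by apply: le_trans tr ru.
apply: final_alg => //.
rewrite leNgt; apply/negP => gpos.
pose H := fun x => normal_pdf mup K (x + eps) - normal_pdf mum 1 (x - eps).
have HE : forall x, H x = normal_peak 1 * g_fun mum mup K eps x.
  by move=> x; rewrite /H pdf_g.
have p1 : 0 < normal_peak (1 : R) by apply: normal_peak_gt0; exact: oner_neq0.
have cH : continuous H.
  move=> x; apply: cvgB.
  - apply: (@continuous_comp R^o R^o R^o (fun z => z + eps) (normal_pdf mup K)).
      by apply: cvgD; [exact: cvg_id|exact: cvg_cst].
    exact: continuous_normal_pdf.
  - apply: (@continuous_comp R^o R^o R^o (fun z => z - eps) (normal_pdf mum 1)).
      by apply: cvgB; [exact: cvg_id|exact: cvg_cst].
    by apply: continuous_normal_pdf; exact: oner_neq0.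
have ath : mum + eps <= theta by apply: le_trans atf tf.
have Ha : H (mum + eps) < 0 by rewrite HE pmulr_rlt0 // g_a_neg.
have Ht : 0 < H theta by rewrite HE mulr_gt0.
have [c cI Hc] : exists2 c, c \in `[mum + eps, theta] & H c = 0.
  apply: IVT => //.
    have := @continuous_subspaceT R^o R^o `[mum + eps, theta] H cH.
    exact.
  by apply/andP; split; [rewrite ge_min (ltW Ha)|rewrite le_max (ltW Ht) orbT].
move: cI; rewrite in_itv /= => /andP[ac ct].
have gc : g_fun mum mup K eps c = 0.
  by move: Hc; rewrite HE => /eqP; rewrite mulf_eq0 gt_eqF //= => /eqP.
have ctl : c < theta.
  rewrite lt_neqAle ct andbT; apply/eqP => ce.
  by move: gpos; rewrite -ce gc ltxx.
have Rle : R_rob mum mup K eps c <= R_rob mum mup K eps theta_r.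
  apply: Rrob_le => //; first by apply: le_trans ct tr.
  move=> z /andP[cz _].
  rewrite -subr_ge0 -/(H z) HE pmulr_rge0 //.
  apply: (g_sign _ _ _ _ _ c) => //.
  by rewrite gc.
have cmin : is_rob_minimizer mum mup K eps c.
  split.
    apply/andP; split; first lra.
    by apply: le_trans (le_trans ct tr) ru.
  by move=> s hs; apply: le_trans Rle (rmin s hs).
have := uniq c cmin => ec.
by move: ctl; rewrite ec => /(lt_le_trans)/(_ tr); rewrite ltxx.
Qed.
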